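(* Let $\mathscr{a}\in\mathbb{R}$, $\mathscr{b}\in(\mathscr{a},\infty)$, $\rho\in(0,\infty)$, $f\in C([\mathscr{a},\mathscr{b}],\mathbb{R})$, for $\theta=(\theta_1,\theta_2,\theta_3,\theta_4)\in\mathbb{R}^4$ and $x\in\mathbb{R}$ let $\mathscr{N}^\theta(x)=\theta_3\max\{\theta_1x+\theta_2,0\}+\theta_4$ and $\mathcal{L}(\theta)=\rho\int_{\mathscr{a}}^{\mathscr{b}}(\mathscr{N}^\theta(y)-f(y))^2\,\mathrm{d}y$, and let $m\in\mathbb{R}$, $\varepsilon\in(0,\infty)$ satisfy $m=\rho\int_{\mathscr{a}}^{\mathscr{b}}\big(f(x)-(\mathscr{b}-\mathscr{a})^{-1}\int_{\mathscr{a}}^{\mathscr{b}}f(y)\,\mathrm{d}y\big)^2\,\mathrm{d}x$. Then there exists $\mathfrak{C}\in(0,\infty)$ such that for all $\theta\in\mathbb{R}^4$ with $\mathcal{L}(\theta)\le m-\varepsilon$ it holds that $\mathfrak{C}^{-1}\le|\theta_1\theta_3|\le\mathfrak{C}$. *)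

(* Defs.v *)
From Stdlib Require Import Reals.
From Coquelicot Require Import Coquelicot.
Open Scope R_scope.

Definition continuous_on_Icc (f : R -> R) (a b : R) : Prop :=
  forall x, a <= x <= b ->
    filterlim f (within (fun y => a <= y <= b) (locally x)) (locally (f x)).

Definition realization (t1 t2 t3 t4 x : R) : R :=
  t3 * Rmax (t1 * x + t2) 0 + t4.

Definition risk (a b rho : R) (f : R -> R) (t1 t2 t3 t4 : R) : R :=
  rho * RInt (fun y => (realization t1 t2 t3 t4 y - f y) ^ 2) a b.

(* Main.v *)
Require Import Defs.
From Stdlib Require Import Reals.
From Coquelicot Require Import Coquelicot.
From Stdlib Require Import Lra FunctionalExtensionality.
Open Scope R_scope.

Definition clamp (a b x : R) := Rmax a (Rmin b x).

Lemma clamp_in a b x : a <= b -> a <= clamp a b x <= b.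
Proof. intros; unfold clamp, Rmax, Rmin; repeat destruct Rle_dec; lra. Qed.

Lemma clamp_id a b x : a <= x <= b -> clamp a b x = x.
Proof. intros; unfold clamp, Rmax, Rmin; repeat destruct Rle_dec; lra. Qed.

Lemma clamp_lip a b x y : a <= b -> Rabs (clamp a b y - clamp a b x) <= Rabs (y - x).
Proof. intros; unfold clamp, Rmax, Rmin; repeat destruct Rle_dec;
  unfold Rabs; repeat destruct Rcase_abs; lra. Qed.

Lemma F_cont f a b : a <= b -> continuous_on_Icc f a b ->
  forall x, continuous (fun y => f (clamp a b y)) x.
Proof.
  intros hab hf x.
  apply (filterlim_comp _ _ _ (clamp a b) f _ (within (fun y => a <= y <= b) (locally (clamp a b x)))).
  - intros P [e He]. exists e. intros y Hy. apply He.
    + change (Rabs (clamp a b y - clamp a b x) < e).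
      eapply Rle_lt_trans. apply clamp_lip; auto. exact Hy.
    + apply clamp_in; auto.
  - apply hf. apply clamp_in; auto.
Qed.

Lemma F_bound f a b : a <= b -> continuous_on_Icc f a b ->
  exists M, 0 <= M /\ forall x, Rabs (f (clamp a b x)) <= M.
Proof.
  intros hab hf.
  destruct (continuity_ab_maj (fun x => Rabs (f (clamp a b x))) a b hab) as [c [Hc Hc2]].
  { intros c _. apply continuity_pt_filterlim.
    apply (continuous_comp (fun y => f (clamp a b y)) Rabs). apply F_cont; auto.
    apply continuous_Rabs. }
  exists (Rabs (f (clamp a b c))). split. apply Rabs_pos.
  intros x. rewrite <- (clamp_id a b (clamp a b x)) by (apply clamp_in; auto).
  apply Hc. apply clamp_in; auto.
Qed.

Lemma Rmax0_eq u : Rmax u 0 = (u + Rabs u) / 2.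
Proof. unfold Rmax, Rabs; repeat destruct Rle_dec; repeat destruct Rcase_abs; lra. Qed.

Lemma real_cont t1 t2 t3 t4 x : continuous (realization t1 t2 t3 t4) x.
Proof.
  apply continuity_pt_filterlim.
  assert (E : realization t1 t2 t3 t4 = (fun y => t3 * ((t1 * y + t2 + Rabs (t1 * y + t2)) / 2) + t4)).
  { apply functional_extensionality; intros y. unfold realization. rewrite Rmax0_eq. reflexivity. }
  rewrite E. clear E.
  apply (continuity_pt_plus (fun y => t3 * ((t1 * y + t2 + Rabs (t1 * y + t2)) / 2)) (fun _ => t4)); [|apply continuity_pt_const; intros ??; reflexivity].
  apply (continuity_pt_mult (fun _ => t3)); [apply continuity_pt_const; intros ??; reflexivity|].
  apply (continuity_pt_div (fun y => t1 * y + t2 + Rabs (t1 * y + t2)) (fun _ => 2)); [| apply continuity_pt_const; intros ??; reflexivity | lra].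
  assert (L : continuity_pt (fun y => t1 * y + t2) x).
  { apply (continuity_pt_plus (fun y => t1 * y) (fun _ => t2)); [|apply continuity_pt_const; intros ??; reflexivity].
    apply (continuity_pt_mult (fun _ => t1) (fun y => y)); [apply continuity_pt_const; intros ??; reflexivity| apply derivable_continuous_pt, derivable_pt_id]. }
  apply (continuity_pt_plus (fun y => t1 * y + t2) (fun y => Rabs (t1 * y + t2))); auto.
  apply (continuity_pt_comp (fun y => t1 * y + t2) Rabs); auto. apply Rcontinuity_abs.
Qed.

Lemma RInt_plus' (A B : R -> R) p q : ex_RInt A p q -> ex_RInt B p q ->
  RInt (fun x => A x + B x) p q = RInt A p q + RInt B p q.
Proof. intros; apply (RInt_plus A B); auto. Qed.
Lemma RInt_scal' (A : R -> R) l p q : ex_RInt A p q ->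
  RInt (fun x => l * A x) p q = l * RInt A p q.
Proof. intros; apply (RInt_scal A); auto. Qed.
Lemma RInt_const' (c : R) p q : RInt (fun _ => c) p q = (q - p) * c.
Proof. rewrite RInt_const. reflexivity. Qed.

Lemma exR (g : R -> R) p q : (forall x, continuous g x) -> ex_RInt g p q.
Proof. intros; apply (ex_RInt_continuous (V := R_CompleteNormedModule)); auto. Qed.

Lemma sq_cont (g h : R -> R) : (forall x, continuous g x) -> (forall x, continuous h x) ->
  forall x, continuous (fun y => (g y - h y) ^ 2) x.
Proof.
  intros Hg Hh x. apply continuity_pt_filterlim.
  assert (A1 : continuity_pt g x) by (apply continuity_pt_filterlim; apply Hg).
  assert (A2 : continuity_pt h x) by (apply continuity_pt_filterlim; apply Hh).
  apply (continuity_pt_comp (fun y => g y - h y) (fun u => u ^ 2)).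
  - apply (continuity_pt_minus g h x); auto.
  - exact (derivable_continuous_pt _ _ (derivable_pt_pow 2 _)).
Qed.

Lemma sub_le (G : R -> R) a b q r : (forall x, continuous G x) -> (forall x, 0 <= G x) ->
  a <= q -> q <= r -> r <= b -> RInt G q r <= RInt G a b.
Proof.
  intros Hc Hp h1 h2 h3.
  rewrite <- (RInt_Chasles G a q b) by (apply exR; auto).
  rewrite <- (RInt_Chasles G q r b) by (apply exR; auto).
  assert (0 <= RInt G a q) by (apply RInt_ge_0; auto; apply exR; auto).
  assert (0 <= RInt G r b) by (apply RInt_ge_0; auto; apply exR; auto).
  change (RInt G q r <= RInt G a q + (RInt G q r + RInt G r b)). lra.
Qed.

Lemma const_lb (G : R -> R) q r T : (forall x, continuous G x) -> q <= r ->
  (forall x, q < x < r -> T <= G x) -> (r - q) * T <= RInt G q r.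
Proof.
  intros Hc h H. rewrite <- RInt_const'. apply RInt_le; auto.
  apply ex_RInt_const. apply exR; auto.
Qed.

Lemma var_min (F : R -> R) a b al : (forall x, continuous F x) -> a < b ->
  RInt (fun x => (F x - / (b - a) * RInt F a b) ^ 2) a b <= RInt (fun x => (al - F x) ^ 2) a b.
Proof.
  intros Hc hab. set (mu := / (b - a) * RInt F a b).
  assert (HI : RInt F a b = mu * (b - a)).
  { unfold mu. generalize (RInt F a b). intros r. change R in r. change (r = / (b - a) * r * (b - a)). field. lra. }
  rewrite (RInt_ext (fun x => (al - F x) ^ 2)
     (fun x => (F x - mu) ^ 2 + ((al ^ 2 - mu ^ 2) + (-2 * (al - mu)) * F x)))
    by (intros x _; cbn; ring).
  assert (Hs : forall x, continuous (fun y => (F y - mu) ^ 2) x)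
    by (apply sq_cont; auto; intros; apply continuous_const).
  rewrite RInt_plus'; [| apply exR; auto |].
  2:{ apply (ex_RInt_plus (fun _ => al ^ 2 - mu ^ 2) (fun x => -2 * (al - mu) * F x)).
      apply ex_RInt_const. apply (ex_RInt_scal F). apply exR; auto. }
  rewrite RInt_plus'; [| apply ex_RInt_const | apply (ex_RInt_scal F); apply exR; auto].
  rewrite RInt_scal' by (apply exR; auto). rewrite RInt_const', HI.
  assert (0 <= (b - a) * (al - mu) ^ 2) by (apply Rmult_le_pos; [lra| apply pow2_ge_0]).
  nra.
Qed.

Lemma RInt_ext' (A B : R -> R) p q : (forall x, Rmin p q < x < Rmax p q -> A x = B x) ->
  RInt A p q = RInt B p q.
Proof. intros; apply RInt_ext; auto. Qed.

Lemma split3 (G : R -> R) a p q b : (forall x, continuous G x) ->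
  RInt G a b = RInt G a p + RInt G p q + RInt G q b.
Proof.
  intros Hc.
  rewrite <- (RInt_Chasles G a p b) by (apply exR; auto).
  rewrite <- (RInt_Chasles G p q b) by (apply exR; auto).
  change (RInt G a p + (RInt G p q + RInt G q b) = RInt G a p + RInt G p q + RInt G q b). ring.
Qed.

Lemma const_ub (G : R -> R) q r T : (forall x, continuous G x) -> q <= r ->
  (forall x, q < x < r -> G x <= T) -> RInt G q r <= (r - q) * T.
Proof.
  intros Hc h H. rewrite <- RInt_const'. apply RInt_le; auto.
  apply exR; auto. apply ex_RInt_const.
Qed.

Lemma sq_ge t u : 0 <= t -> t <= Rabs u -> t ^ 2 <= u ^ 2.
Proof. intros. rewrite <- (pow2_abs u). nra. Qed.

Lemma sq_le u T : Rabs u <= T -> u ^ 2 <= T ^ 2.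
Proof. intros. rewrite <- (pow2_abs u). pose proof (Rabs_pos u). nra. Qed.

Lemma ab_bound al y M : Rabs y <= M -> Rabs (al - y) <= Rabs al + M.
Proof. intros. unfold Rabs in *; repeat destruct Rcase_abs; lra. Qed.

Lemma ab_lower al y M : Rabs y <= M -> Rabs al - M <= Rabs (al - y).
Proof. intros. unfold Rabs in *; repeat destruct Rcase_abs; lra. Qed.

Lemma L_const (F N : R -> R) a b M V t K d e al p :
  (forall x, continuous F x) -> (forall x, continuous N x) ->
  (forall x, Rabs (F x) <= M) -> a < b -> 0 < d -> d <= (b - a) / 2 -> 1 <= t ->
  K = M + t -> (b - a) / 2 * t >= Rabs V + 1 -> d * (K + M) ^ 2 < e ->
  (forall al', V <= RInt (fun x => (al' - F x) ^ 2) a b) ->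
  a <= p -> p + d <= b ->
  (forall x, a < x < p -> N x = al) -> (forall x, p + d < x < b -> N x = al) ->
  V - e < RInt (fun x => (N x - F x) ^ 2) a b.
Proof.
  intros HF HN HM hab hd hd2 ht HK HV he Hvar hp hpd N1 N2.
  set (G := fun x => (N x - F x) ^ 2).
  assert (HG : forall x, continuous G x) by (apply sq_cont; auto).
  rewrite (split3 G a p (p + d) b HG).
  assert (G0 : 0 <= RInt G p (p + d)) by (apply RInt_ge_0; [lra| apply exR; auto | intros; apply pow2_ge_0]).
  destruct (Rle_lt_dec (Rabs al) K) as [Hs | Hb].
  - set (H := fun x => (al - F x) ^ 2).
    assert (HH : forall x, continuous H x) by (apply sq_cont; auto; intros; apply continuous_const).
    pose proof (Hvar al) as HV1. fold H in HV1.
    rewrite (split3 H a p (p + d) b HH) in HV1.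
    assert (E1 : RInt G a p = RInt H a p).
    { apply RInt_ext'. intros x Hx. rewrite Rmin_left in Hx by lra. rewrite Rmax_right in Hx by lra.
      unfold G, H. rewrite N1; auto. }
    assert (E2 : RInt G (p + d) b = RInt H (p + d) b).
    { apply RInt_ext'. intros x Hx. rewrite Rmin_left in Hx by lra. rewrite Rmax_right in Hx by lra.
      unfold G, H. rewrite N2; auto. }
    assert (U : RInt H p (p + d) <= (p + d - p) * (K + M) ^ 2).
    { apply const_ub; auto; try lra. intros x _. unfold H.
      apply sq_le. pose proof (ab_bound al (F x) M (HM x)). lra. }
    rewrite E1, E2. nra.
  - assert (T : forall x, N x = al -> t ^ 2 <= G x).
    { intros x Hx. unfold G. rewrite Hx. apply sq_ge. lra.
      pose proof (ab_lower al (F x) M (HM x)). lra. }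
    assert (I1 : (p - a) * t ^ 2 <= RInt G a p) by (apply const_lb; auto; intros; apply T; apply N1; auto).
    assert (I2 : (b - (p + d)) * t ^ 2 <= RInt G (p + d) b) by (apply const_lb; auto; intros; apply T; apply N2; auto).
    assert (0 <= d * (K + M) ^ 2) by (apply Rmult_le_pos; [lra | apply pow2_ge_0]).
    pose proof (Rle_abs V).
    assert (t2 : t <= t ^ 2) by nra.
    assert (X : (b - a) / 2 * t ^ 2 <= (p - a) * t ^ 2 + (b - (p + d)) * t ^ 2).
    { assert (0 <= t ^ 2) by apply pow2_ge_0. nra. }
    assert (Y : (b - a) / 2 * t <= (b - a) / 2 * t ^ 2) by (apply Rmult_le_compat_l; lra).
    lra.
Qed.

Lemma lin_abs A s h : 0 <= A * s -> 0 <= h -> Rabs s * h <= Rabs (A + s * h).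
Proof.
  intros H1 H2. destruct (Rtotal_order s 0) as [Hs|[Hs|Hs]].
  - assert (A <= 0) by nra. assert (s * h <= 0) by nra.
    rewrite (Rabs_left s) by lra. rewrite Rabs_left1 by lra. nra.
  - subst. rewrite Rabs_R0. rewrite Rmult_0_l. apply Rabs_pos.
  - assert (0 <= A) by nra. assert (0 <= s * h) by nra.
    rewrite (Rabs_right s) by lra. rewrite Rabs_right by lra. nra.
Qed.

Lemma L_lin (F N : R -> R) a b M V d s T be p :
  (forall x, continuous F x) -> (forall x, continuous N x) ->
  (forall x, Rabs (F x) <= M) -> 0 < d -> a <= p -> p + d <= b -> 0 <= T ->
  M + T <= Rabs s * d / 6 -> V < d / 3 * T ^ 2 ->
  (forall x, p <= x <= p + d -> N x = be + s * x) ->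
  V < RInt (fun x => (N x - F x) ^ 2) a b.
Proof.
  intros HF HN HM hd hp hpd hT HS HV HNl.
  set (G := fun x => (N x - F x) ^ 2).
  assert (HG : forall x, continuous G x) by (apply sq_cont; auto).
  assert (G0 : forall x, 0 <= G x) by (intros; apply pow2_ge_0).
  set (mid := p + d / 2). set (A := be + s * mid).
  assert (HN2 : forall x, p <= x <= p + d -> N x = A + s * (x - mid)).
  { intros x Hx. rewrite HNl; auto. unfold A. ring. }
  assert (Key : forall x, T <= Rabs (N x) - M -> T ^ 2 <= G x).
  { intros x Hx. unfold G. apply sq_ge; auto.
    pose proof (ab_lower (N x) (F x) M (HM x)). lra. }
  destruct (Rle_lt_dec 0 (A * s)) as [HA | HA].
  - assert (I : (p + d - (p + 2 * d / 3)) * T ^ 2 <= RInt G (p + 2 * d / 3) (p + d)).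
    { apply const_lb; auto; try lra. intros x Hx. apply Key. rewrite HN2 by lra.
      pose proof (lin_abs A s (x - mid) HA ltac:(unfold mid; lra)).
      assert (Rabs s * (d / 6) <= Rabs s * (x - mid)) by (apply Rmult_le_compat_l; [apply Rabs_pos| unfold mid; lra]).
      lra. }
    pose proof (sub_le G a b (p + 2 * d / 3) (p + d) HG G0 ltac:(lra) ltac:(lra) ltac:(lra)).
    fold G. lra.
  - assert (I : (p + d / 3 - p) * T ^ 2 <= RInt G p (p + d / 3)).
    { apply const_lb; auto; try lra. intros x Hx. apply Key. rewrite HN2 by lra.
      assert (HA' : 0 <= (- A) * s) by nra.
      pose proof (lin_abs (- A) s (mid - x) HA' ltac:(unfold mid; lra)).
      replace (A + s * (x - mid)) with (- (- A + s * (mid - x))) by ring.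
      rewrite Rabs_Ropp.
      assert (Rabs s * (d / 6) <= Rabs s * (mid - x)) by (apply Rmult_le_compat_l; [apply Rabs_pos| unfold mid; lra]).
      lra. }
    pose proof (sub_le G a b p (p + d / 3) HG G0 ltac:(lra) ltac:(lra) ltac:(lra)).
    fold G. lra.
Qed.

Lemma L_small (F N : R -> R) a b M V K t e s :
  (forall x, continuous F x) -> (forall x, continuous N x) ->
  (forall x, Rabs (F x) <= M) -> a < b -> 1 <= t ->
  K = M + t -> (b - a) / 2 * t >= Rabs V + 1 ->
  (forall x y, Rabs (N x - N y) <= Rabs s * Rabs (x - y)) ->
  Rabs s * (b - a) <= 1 -> 2 * (K + 1 + M) * (b - a) ^ 2 * Rabs s < e ->
  (forall al', V <= RInt (fun x => (al' - F x) ^ 2) a b) ->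
  V - e < RInt (fun x => (N x - F x) ^ 2) a b.
Proof.
  intros HF HN HM hab ht HK HV HL hs he Hvar.
  set (G := fun x => (N x - F x) ^ 2).
  assert (HG : forall x, continuous G x) by (apply sq_cont; auto).
  set (al := N a). set (D := Rabs s * (b - a)).
  assert (Hw : forall x, a < x < b -> Rabs (N x - al) <= D).
  { intros x Hx. unfold al, D. eapply Rle_trans. apply HL.
    apply Rmult_le_compat_l. apply Rabs_pos. rewrite Rabs_right by lra. lra. }
  assert (HD0 : 0 <= D) by (unfold D; apply Rmult_le_pos; [apply Rabs_pos|lra]).
  assert (HM0 : 0 <= M) by (pose proof (HM a); pose proof (Rabs_pos (F a)); lra).
  assert (e0 : 0 < e).
  { assert (0 <= 2 * (K + 1 + M) * (b - a) ^ 2 * Rabs s); [|lra].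
    apply Rmult_le_pos; [|apply Rabs_pos]. apply Rmult_le_pos; [lra| apply pow2_ge_0]. }
  destruct (Rle_lt_dec (Rabs al) (K + 1)) as [Hs | Hb].
  - set (c := 2 * (K + 1 + M) * D).
    set (H := fun x => (al - F x) ^ 2).
    assert (HH : forall x, continuous H x) by (apply sq_cont; auto; intros; apply continuous_const).
    assert (P : forall x, a < x < b -> H x + (- c) <= G x).
    { intros x Hx. unfold H, G.
      set (u := al - F x). set (w := N x - al).
      replace (N x - F x) with (u + w) by (unfold u, w; ring).
      assert (Hu : Rabs u <= K + 1 + M) by (unfold u; pose proof (ab_bound al (F x) M (HM x)); lra).
      assert (Hw' : Rabs w <= D) by (apply Hw; auto).
      assert (X1 : - (u * w) <= Rabs u * Rabs w) by (rewrite <- Rabs_mult; rewrite <- Rabs_Ropp; apply Rle_abs).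
      assert (X2 : Rabs u * Rabs w <= (K + 1 + M) * D) by (apply Rmult_le_compat; auto; apply Rabs_pos).
      unfold c. nra. }
    assert (I : RInt (fun x => H x + (- c)) a b <= RInt G a b).
    { apply RInt_le; [lra | | apply exR; auto | auto].
      apply (ex_RInt_plus H (fun _ => - c)). apply exR; auto. apply ex_RInt_const. }
    rewrite RInt_plus' in I; [| apply exR; auto | apply ex_RInt_const].
    rewrite RInt_const' in I. pose proof (Hvar al). fold H in H0.
    assert ((b - a) * c < e) by (replace ((b - a) * c) with (2 * (K + 1 + M) * (b - a) ^ 2 * Rabs s) by (unfold c, D; ring); lra).
    fold G. nra.
  - assert (T : forall x, a < x < b -> t ^ 2 <= G x).
    { intros x Hx. unfold G. apply sq_ge. lra.
      pose proof (ab_lower (N x) (F x) M (HM x)). pose proof (Hw x Hx).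
      assert (Rabs al - D <= Rabs (N x)).
      { pose proof (Rabs_triang_inv al (al - N x)) as Tr.
        replace (al - (al - N x)) with (N x) in Tr by ring.
        rewrite (Rabs_minus_sym al (N x)) in Tr. lra. }
      unfold D in *. lra. }
    assert (I : (b - a) * t ^ 2 <= RInt G a b) by (apply const_lb; auto; lra).
    pose proof (Rle_abs V).
    assert (t2 : t <= t ^ 2) by nra.
    assert (Y : (b - a) * t <= (b - a) * t ^ 2) by (apply Rmult_le_compat_l; lra).
    fold G. pose proof (Rabs_pos V). lra.
Qed.

Lemma Rmax0_lip u v : Rabs (Rmax u 0 - Rmax v 0) <= Rabs (u - v).
Proof. unfold Rmax, Rabs; repeat destruct Rle_dec; repeat destruct Rcase_abs; lra. Qed.

Lemma N_lip t1 t2 t3 t4 x y :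
  Rabs (realization t1 t2 t3 t4 x - realization t1 t2 t3 t4 y) <= Rabs (t1 * t3) * Rabs (x - y).
Proof.
  unfold realization.
  replace (t3 * Rmax (t1 * x + t2) 0 + t4 - (t3 * Rmax (t1 * y + t2) 0 + t4))
    with (t3 * (Rmax (t1 * x + t2) 0 - Rmax (t1 * y + t2) 0)) by ring.
  rewrite Rabs_mult. rewrite Rabs_mult.
  pose proof (Rmax0_lip (t1 * x + t2) (t1 * y + t2)).
  replace (t1 * x + t2 - (t1 * y + t2)) with (t1 * (x - y)) in H by ring.
  rewrite Rabs_mult in H.
  pose proof (Rabs_pos t3).
  replace (Rabs t1 * Rabs t3 * Rabs (x - y)) with (Rabs t3 * (Rabs t1 * Rabs (x - y))) by ring.
  apply Rmult_le_compat_l; auto.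
Qed.

Theorem proposition5p8 (a b rho : R) (f : R -> R) (m eps : R) :
  a < b -> 0 < rho -> continuous_on_Icc f a b -> 0 < eps ->
  m = rho * RInt (fun x => (f x - / (b - a) * RInt f a b) ^ 2) a b ->
  exists C : R, 0 < C /\
    forall t1 t2 t3 t4 : R,
      risk a b rho f t1 t2 t3 t4 <= m - eps ->
      / C <= Rabs (t1 * t3) <= C.
Proof.
  intros hab hrho hf heps hm.
  set (F := fun x => f (clamp a b x)).
  assert (HF : forall x, continuous F x) by (apply F_cont; auto; lra).
  destruct (F_bound f a b ltac:(lra) hf) as [M [HM0 HM]]. change (forall x, Rabs (F x) <= M) in HM.
  assert (EF : forall x, a < x < b -> f x = F x).
  { intros x Hx. unfold F. rewrite clamp_id; auto; lra. }
  set (V := RInt (fun x => (F x - / (b - a) * RInt F a b) ^ 2) a b).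
  assert (Hm : m = rho * V).
  { rewrite hm. unfold V. f_equal.
    assert (E1 : RInt f a b = RInt F a b).
    { apply RInt_ext'. intros x Hx. rewrite Rmin_left in Hx by lra. rewrite Rmax_right in Hx by lra. auto. }
    rewrite E1. apply RInt_ext'. intros x Hx. rewrite Rmin_left in Hx by lra. rewrite Rmax_right in Hx by lra.
    rewrite EF; auto. }
  assert (Hvar : forall al, V <= RInt (fun x => (al - F x) ^ 2) a b) by (intros; apply var_min; auto).
  set (e := eps / rho).
  assert (he : 0 < e) by (unfold e; apply Rdiv_lt_0_compat; auto).
  set (t := 1 + 2 * (Rabs V + 1) / (b - a)).
  assert (Ht1 : 1 <= t).
  { unfold t. assert (0 <= 2 * (Rabs V + 1) / (b - a)); [|lra].
    apply Rmult_le_pos. pose proof (Rabs_pos V); lra. left; apply Rinv_0_lt_compat; lra. }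
  assert (HtV : (b - a) / 2 * t >= Rabs V + 1).
  { unfold t. replace ((b - a) / 2 * (1 + 2 * (Rabs V + 1) / (b - a))) with ((b - a) / 2 + (Rabs V + 1)) by (field; lra). lra. }
  set (K := M + t).
  set (q := (K + M) ^ 2).
  assert (q0 : 0 <= q) by apply pow2_ge_0.
  set (d := Rmin ((b - a) / 2) (e / (2 * q + 1))).
  assert (hd0 : 0 < d).
  { unfold d. apply Rmin_glb_lt. lra. apply Rdiv_lt_0_compat; lra. }
  assert (hd1 : d <= (b - a) / 2) by apply Rmin_l.
  assert (hdq : d * q < e).
  { assert (d * (2 * q + 1) <= e).
    { assert (EE : e / (2 * q + 1) * (2 * q + 1) = e) by (field; lra).
      rewrite <- EE. apply Rmult_le_compat_r. lra. apply Rmin_r. }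
    nra. }
  set (c0 := 4 * (K + 1 + M) * (b - a) ^ 2).
  assert (c00 : 0 < c0).
  { unfold c0. apply Rmult_lt_0_compat. unfold K; lra. apply pow_lt; lra. }
  set (eta := Rmin (/ (b - a)) (e / c0)).
  assert (heta : 0 < eta).
  { unfold eta. apply Rmin_glb_lt. apply Rinv_0_lt_compat; lra. apply Rdiv_lt_0_compat; lra. }
  set (T := 1 + 3 * (Rabs V + 1) / d).
  assert (HT1 : 1 <= T).
  { unfold T. assert (0 <= 3 * (Rabs V + 1) / d); [|lra].
    apply Rmult_le_pos. pose proof (Rabs_pos V); lra. left; apply Rinv_0_lt_compat; lra. }
  assert (HTV : V < d / 3 * T ^ 2).
  { assert (E : d / 3 * T = d / 3 + (Rabs V + 1)) by (unfold T; field; lra).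
    assert (d / 3 * T <= d / 3 * T ^ 2) by (apply Rmult_le_compat_l; nra).
    pose proof (Rle_abs V). lra. }
  set (S := 6 * (M + T) / d).
  assert (HS0 : 0 < S) by (unfold S; apply Rdiv_lt_0_compat; lra).
  exists (Rmax S (/ eta)). split.
  { eapply Rlt_le_trans. exact HS0. apply Rmax_l. }
  intros t1 t2 t3 t4 Hr.
  set (N := realization t1 t2 t3 t4).
  assert (HN : forall x, continuous N x) by (intros; apply real_cont).
  set (W := RInt (fun x => (N x - F x) ^ 2) a b).
  assert (HW : W <= V - e).
  { assert (Er : risk a b rho f t1 t2 t3 t4 = rho * W).
    { unfold risk, W. f_equal. apply RInt_ext'. intros x Hx.
      rewrite Rmin_left in Hx by lra. rewrite Rmax_right in Hx by lra. rewrite EF; auto. }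
    rewrite Er, Hm in Hr.
    assert (Ee : eps = rho * e) by (unfold e; field; lra).
    rewrite Ee in Hr. 
    apply (Rmult_le_reg_l rho); auto. lra. }
  set (s := t1 * t3).
  assert (Hlow : eta < Rabs s).
  { destruct (Rlt_le_dec eta (Rabs s)) as [h|h]; auto. exfalso.
    assert (V - e < W).
    { apply (L_small F N a b M V K t e s); auto.
      - intros x y. apply N_lip.
      - assert (Rabs s <= / (b - a)) by (eapply Rle_trans; [exact h| apply Rmin_l]).
        replace 1 with (/ (b - a) * (b - a)) by (field; lra).
        apply Rmult_le_compat_r; lra.
      - assert (Rabs s <= e / c0) by (eapply Rle_trans; [exact h| apply Rmin_r]).
        assert (Rabs s * c0 <= e).
        { assert (EE : e / c0 * c0 = e) by (field; lra). rewrite <- EE.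
          apply Rmult_le_compat_r; lra. }
        unfold c0 in *. pose proof (Rabs_pos s). 
        assert (0 <= (K + 1 + M) * (b - a) ^ 2 * Rabs s).
        { apply Rmult_le_pos; auto. apply Rmult_le_pos. unfold K; lra. apply pow2_ge_0. }
        nra. }
    lra. }
  assert (Hup : Rabs s < S).
  { destruct (Rlt_le_dec (Rabs s) S) as [h|h]; auto. exfalso.
    assert (HsS : M + T <= Rabs s * d / 6).
    { assert (S * d / 6 = M + T) by (unfold S; field; lra).
      assert (S * d <= Rabs s * d) by (apply Rmult_le_compat_r; lra). lra. }
    assert (Hab2 : a <= b - d) by lra.
    assert (t1 <> 0).
    { intro z. unfold s in h. rewrite z, Rmult_0_l, Rabs_R0 in h. lra. }
    assert (Hlin : forall p, a <= p -> p + d <= b ->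
      (forall x, p <= x <= p + d -> N x = (t3 * t2 + t4) + s * x) -> False).
    { intros p h1 h2 h3.
      pose proof (L_lin F N a b M V d s T (t3 * t2 + t4) p HF HN HM hd0 h1 h2 ltac:(lra) HsS HTV h3).
      fold W in H0. lra. }
    assert (Hcst : forall p, a <= p -> p + d <= b ->
      (forall x, a < x < p -> N x = t4) -> (forall x, p + d < x < b -> N x = t4) -> False).
    { intros p h1 h2 h3 h4.
      pose proof (L_const F N a b M V t K d e t4 p HF HN HM hab hd0 hd1 Ht1 eq_refl HtV hdq Hvar h1 h2 h3 h4).
      fold W in H0. lra. }
    assert (NL : forall x, 0 <= t1 * x + t2 -> N x = (t3 * t2 + t4) + s * x).
    { intros x hx. unfold N, realization, s. rewrite Rmax_left by lra. ring. }
    assert (NC : forall x, t1 * x + t2 <= 0 -> N x = t4).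
    { intros x hx. unfold N, realization. rewrite Rmax_right by lra. ring. }
    destruct (Rlt_or_le 0 t1) as [Hp | Hn].
    - destruct (Rle_lt_dec 0 (t1 * (b - d) + t2)) as [c1 | c1].
      + apply (Hlin (b - d)); try lra. intros x hx. apply NL. nra.
      + apply (Hcst (b - d)); try lra.
        * intros x hx. apply NC. nra.
        * intros x hx. lra.
    - assert (t1 < 0) by lra.
      destruct (Rle_lt_dec 0 (t1 * (a + d) + t2)) as [c1 | c1].
      + apply (Hlin a); try lra. intros x hx. apply NL. nra.
      + apply (Hcst a); try lra.
        * intros x hx. lra.
        * intros x hx. apply NC. nra. }
  split.
  - assert (/ eta <= Rmax S (/ eta)) by apply Rmax_r.
    assert (0 < / eta) by (apply Rinv_0_lt_compat; lra).
    assert (/ Rmax S (/ eta) <= / / eta) by (apply Rinv_le_contravar; lra).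
    rewrite Rinv_inv in H1. fold s. lra.
  - fold s. pose proof (Rmax_l S (/ eta)). lra.
Qed.
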